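(* Let $(A,v)\in\mathfrak g\times V$ satisfy $\langle A^kv,v\rangle=0$ for all integers $k\ge0$. Then: (i) if $\mathfrak g=\mathfrak u$ or $\mathfrak g=\mathfrak{sp}$, then for every $\lambda\in\mathbb{K}$ (required to satisfy $\bar\lambda=-\lambda$ in the case $\mathfrak u$) the operator $A+\lambda\phi_v$ has the same characteristic polynomial as $A$; (ii) if $\mathfrak g=\mathfrak o$, then for every $\lambda\in\mathbb{F}$ the operator $A+\lambda A\phi_v+\lambda\phi_vA$ has the same characteristic polynomial as $A$.
   Context: $\mathbb{K}=\mathbb{F}$ or a quadratic extension of a field $\mathbb{F}$ of characteristic $\neq2$, with conjugation $\lambda\mapsto\bar\lambda$. $V$ is a finite-dimensional $\mathbb{K}$-space with a non-degenerate form $\langle\cdot,\cdot\rangle$ (linear in the first variable) which is symmetric ($\mathfrak g=\mathfrak o$), Hermitian ($\mathfrak g=\mathfrak u$) or symplectic ($\mathfrak g=\mathfrak{sp}$), and $\mathfrak g=\{A:A^*=-A\}$. For $v\in V$, $\phi_v$ is the operator $u\mapsto\langle u,v\rangle v$. *)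

(* Defs.v *)
From HB Require Import structures.
From mathcomp Require Import all_boot all_order all_algebra.
Set Implicit Arguments. Unset Strict Implicit. Unset Printing Implicit Defensive.
Import GRing.Theory.
Local Open Scope ring_scope.

(* Vectors of V = K^n are column vectors 'cV[K]_n; the form is given by its
   Gram matrix B:  <u, w> = u^T B cj(w)  (linear in the first variable). *)
Definition bform (K : fieldType) (cj : K -> K) (n : nat) (B : 'M[K]_n)
  (u w : 'cV[K]_n) : K := (u^T *m B *m map_mx cj w) 0 0.

Definition nondeg (K : fieldType) (cj : K -> K) (n : nat) (B : 'M[K]_n) :=
  forall u : 'cV[K]_n, (forall w, bform cj B u w = 0) -> u = 0.

(* A is in g = { A : A^* = -A }, i.e. <A u, w> = - <u, A w> for all u, w. *)
Definition in_g (K : fieldType) (cj : K -> K) (n : nat) (B A : 'M[K]_n) :=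
  forall u w : 'cV[K]_n, bform cj B (A *m u) w = - bform cj B u (A *m w).

(* phi_v : u |-> <u, v> v, as a matrix: phi_v *m u = <u,v> *: v. *)
Definition phi (K : fieldType) (cj : K -> K) (n : nat) (B : 'M[K]_n)
  (v : 'cV[K]_n) : 'M[K]_n := v *m ((map_mx cj v)^T *m B^T).

Definition orth_setting (K : fieldType) (cj : K -> K) (n : nat) (B : 'M[K]_n) :=
  (forall x, cj x = x) /\ B^T = B.
Definition symp_setting (K : fieldType) (cj : K -> K) (n : nat) (B : 'M[K]_n) :=
  (forall x, cj x = x) /\ B^T = - B.
(* Unitary case: K a quadratic extension of the fixed field F of the
   (nontrivial, involutive) conjugation; Hermitian form <u,w> = cj <w,u>. *)
Definition herm_setting (K : fieldType) (cj : K -> K) (n : nat) (B : 'M[K]_n) :=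
  (exists x, cj x != x) /\ B^T = map_mx cj B.

(* Main.v *)
Require Import Defs.
From HB Require Import structures.
From mathcomp Require Import all_boot all_order all_algebra.
Import GRing.Theory.
Local Open Scope ring_scope.

Lemma rank1 (K : fieldType) n (A : 'M[K]_n.+1) (u : 'cV[K]_n.+1) (w : 'rV[K]_n.+1) :
  (forall k, w *m (A ^+ k) *m u = 0) -> char_poly (A + u *m w) = char_poly A.
Proof.
move=> Hk.
set p := char_poly A.
pose Am := map_mx (@polyC K) A.
pose X : 'M[{poly K}]_n.+1 := 'X%:M.
pose U := map_mx (@polyC K) u. pose W := map_mx (@polyC K) w.
pose S := fix S k := if k is k'.+1 then X * S k' + Am ^+ k' else 0.
have HS k : (X - Am) * S k = X ^+ k - Am ^+ k.
  elim: k => [|k IH] /=; first by rewrite mulr0 !expr0 subrr.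
  have cX : (X - Am) * X = X * (X - Am) by rewrite -!mulmxE /X scalar_mxC.
  rewrite mulrDr mulrA cX -mulrA IH.
  by rewrite !exprS mulrBr mulrBl addrA subrK.
have HW k : W *m S k *m U = 0.
  elim: k => [|k IH] /=; first by rewrite mulmx0 mul0mx.
  rewrite mulmxDr mulmxDl -mulmxE /X mul_scalar_mx. rewrite -scalemxAr -scalemxAl IH scaler0 add0r.
  by rewrite /Am -rmorphXn /= /W /U -!map_mxM Hk map_mx0.
pose Q := \sum_(i < size p) (p`_i)%:P *: S i.
have HMQ : (X - Am) *m Q = p%:M.
  rewrite mulmx_sumr.
  have HS' k : (X - Am) *m S k = X ^+ k - Am ^+ k by exact: HS.
  under eq_bigr do rewrite -scalemxAr HS' scalerBr.
  rewrite sumrB.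
  have -> : \sum_(i < size p) (p`_i)%:P *: Am ^+ i = 0.
    have E : \sum_(i < size p) (p`_i)%:P *: Am ^+ i = map_mx (@polyC K) (horner_mx A p).
      rewrite -[q in horner_mx A q]coefK poly_def linear_sum /= raddf_sum /=.
      apply: eq_bigr => i _.
      by rewrite linearZ /= rmorphXn /= horner_mx_X map_mxZ /Am rmorphXn.
    by rewrite E Cayley_Hamilton map_mx0.
  rewrite subr0.
  under eq_bigr do rewrite /X -rmorphXn /= scale_scalar_mx mul_polyC.
  by rewrite -raddf_sum /= -poly_def coefK.
have HWQU : W *m Q *m U = 0.
  rewrite mulmx_sumr mulmx_suml big1 // => i _.
  by rewrite -scalemxAr -scalemxAl HW scaler0.
have -> : char_poly (A + u *m w) = \det ((X - Am) - U *m W).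
  by rewrite /char_poly /char_poly_mx map_mxD map_mxM opprD addrA.
set M := X - Am.
have detM : \det M = p by [].
pose N := block_mx (1%:M : 'M[{poly K}]_1) W U M.
have E1 : N = block_mx 1%:M 0 U 1%:M *m block_mx 1%:M W 0 (M - U *m W).
  by rewrite mulmx_block ?mul1mx ?mul0mx ?mulmx0 ?mulmx1 ?addr0 ?add0r addrC subrK.
have dN1 : \det N = \det (M - U *m W).
  by rewrite E1 det_mulmx det_lblock det_ublock !det1 !mul1r.
have E2 : N *m block_mx (p%:M : 'M_1) 0 (- (Q *m U)) Q
          = block_mx (p%:M : 'M_1) (W *m Q) 0 (p%:M).
  rewrite mulmx_block ?mul1mx ?mulmx0 ?addr0 ?add0r ?mulmxN ?mulmxA HWQU subr0.
  by rewrite HMQ scalar_mxC subrr.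
have dN2 : \det N * (p * \det Q) = p * p ^+ n.+1.
  have := congr1 determinant E2.
  by rewrite det_mulmx det_lblock det_ublock !det_scalar1 det_scalar.
have dMQ : p * \det Q = p ^+ n.+1 by rewrite -detM -det_mulmx HMQ det_scalar.
have hc : p * \det Q != 0.
  by rewrite dMQ expf_neq0 // monic_neq0 // char_poly_monic.
apply: (mulIf hc); rewrite -dN1 dN2 dMQ.
by [].
Qed.

Lemma char_poly_sim (K : fieldType) n (P R Y : 'M[K]_n) :
  P *m R = 1%:M -> char_poly (P *m Y *m R) = char_poly Y.
Proof.
move=> PR; rewrite /char_poly /char_poly_mx.
have -> : 'X%:M - map_mx (@polyC K) (P *m Y *m R)
   = map_mx (@polyC K) P *m ('X%:M - map_mx (@polyC K) Y) *m map_mx (@polyC K) R.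
  have eX : map_mx (@polyC K) P *m 'X%:M *m map_mx (@polyC K) R = 'X%:M.
    by rewrite scalar_mxC -mulmxA -map_mxM PR map_mx1 mulmx1.
  by rewrite !map_mxM mulmxBr mulmxBl eX.
by rewrite !det_mulmx mulrAC -det_mulmx -map_mxM PR map_mx1 det1 mul1r.
Qed.

Theorem lemma6p6 (K : fieldType) (cj : {rmorphism K -> K}) (n : nat)
  (B A : 'M[K]_n) (v : 'cV[K]_n) :
  (forall x, cj (cj x) = x) ->
  (2%:R : K) != 0 ->
  nondeg cj B ->
  in_g cj B A ->
  (forall k : nat, bform cj B ((A ^+ k) *m v) v = 0) ->
  [/\ (herm_setting cj B ->
         forall lam : K, cj lam = - lam ->
           char_poly (A + lam *: phi cj B v) = char_poly A),
      (symp_setting cj B ->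
         forall lam : K,
           char_poly (A + lam *: phi cj B v) = char_poly A) &
      (orth_setting cj B ->
         forall lam : K, cj lam = lam ->
           char_poly (A + lam *: (A *m phi cj B v)
                        + lam *: (phi cj B v *m A)) = char_poly A)].
Proof.
move=> _ _ _ _ Hk.
case: n B A v Hk => [|n] B A v Hk.
  by split=> *; rewrite /char_poly !det_mx00.
pose w := (map_mx cj v)^T *m B^T.
have phiE : phi cj B v = v *m w by [].
have wx x : bform cj B x v = 0 -> w *m x = 0.
  move=> h.
  have e : (w *m x)^T = x^T *m B *m map_mx cj v by rewrite !trmx_mul !trmxK mulmxA.
  apply/matrixP => i j; rewrite !ord1 [in RHS]mxE.
  move: (congr1 (fun M : 'M_1 => M 0 0) e); rewrite /= mxE => ->; exact: h.
have wAk k : w *m (A ^+ k) *m v = 0 by rewrite -mulmxA; apply: wx; exact: Hk.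
clearbody w.
have case1 lam : char_poly (A + lam *: phi cj B v) = char_poly A.
  rewrite phiE scalemxAl; apply: rank1 => k.
  by rewrite -scalemxAr wAk scaler0.
split; [by move=> _ lam _; exact: case1 | by move=> _ lam; exact: case1 |].
move=> _ lam _; rewrite phiE; set f := v *m w.
have wv : w *m v = 0 by have := wAk 0%N; rewrite expr0 mulmx1.
have wAv : w *m (A *m v) = 0 by have := wAk 1%N; rewrite expr1 mulmxA.
have ff : f *m f = 0 by rewrite /f mulmxA -(mulmxA v) wv mulmx0 mul0mx.
have fAf : f *m A *m f = 0.
  by rewrite /f -!mulmxA (mulmxA A) (mulmxA w) wAv mul0mx mulmx0.
set P := 1%:M + lam *: f; set R := 1%:M - lam *: f.
have PR : P *m R = 1%:M.
  rewrite /P /R mulmxDl mul1mx -scalemxAl mulmxBr mulmx1 -scalemxAr ff scaler0 subr0.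
  by rewrite subrK.
have h1 : (A + (lam + lam) *: (A *m f)) *m R = A + lam *: (A *m f).
  rewrite /R mulmxDl !mulmxBr !mulmx1 -!scalemxAr -scalemxAl -mulmxA ff mulmx0 !scaler0 subr0.
  by rewrite scalerDl addrA subrK.
have h2 : P *m (A + lam *: (A *m f)) = A + lam *: (A *m f) + lam *: (f *m A).
  rewrite /P mulmxDl mul1mx -scalemxAl mulmxDr -scalemxAr (mulmxA f A f) fAf !scaler0 addr0.
  by [].
have -> : A + lam *: (A *m f) + lam *: (f *m A) = P *m (A + (lam + lam) *: (A *m f)) *m R.
  by rewrite -mulmxA h1 h2.
rewrite char_poly_sim // /f mulmxA scalemxAl.
apply: rank1 => k.
rewrite -scalemxAr mulmxA -(mulmxA w) -[A ^+ k *m A]/(A ^+ k * A) -exprSr.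
by rewrite wAk scaler0.
Qed.
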